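(* Let $X$ be a Banach space with a normalized $1$-unconditional basis $(e_i)_i$ not equivalent to the standard basis of $c_0$, and let $q\le p$ in $[1,\infty]$, $q<\infty$, be such that $X$ satisfies lower $p$ and upper $q$ estimates on block sequences with constant one. Let $\varepsilon>0$ and $d\in\mathbb{N}$. Let $P\subseteq\mathbb{N}$ satisfy $\psi_P(k)\ge\frac12(\psi(k)-1)$ for all $k\in\mathbb{N}$, and let $M=\{k_j\}_{j=1}^\infty\subseteq\mathbb{N}$ (with $k_1<k_2<\cdots$) satisfy \[\psi(k_{j+1})\geq\Big(\frac{8d^{1/q-1/p}}{\varepsilon}+2\Big)\psi(k_j)+1\quad\text{for all } j.\] Then for all $\bar m=(m_1,\dots,m_d),\bar n=(n_1,\dots,n_d)\in[M]^d$ with $m_1<n_1<m_2<n_2<\dots<m_d<n_d$, all $(\lambda_s)_{s=1}^d\subseteq\mathbb{R}$, and each $Q\in\{P,P^c\}$: \[\Big\|\sum_{s=1}^d\lambda_s1_{(n_{s-1},n_s]\cap Q}\Big\|_X\le1\implies\Big\|\sum_{s=1}^d\lambda_s1_{(n_{s-1},m_s]}\Big\|_X\le\frac\varepsilon4,\] \[\Big\|\sum_{s=1}^d\lambda_s1_{(m_{s-1},m_s]\cap Q}\Big\|_X\le1\implies\Big\|\sum_{s=1}^d\lambda_s1_{(m_{s-1},n_{s-1}]}\Big\|_X\le\frac\varepsilon4,\] where $m_0=n_0=0$.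
   Context: Identify finitely supported real sequences with elements of $X$ via $(e_i)$; for finite $A\subseteq\mathbb{N}$, $1_A=\sum_{i\in A}e_i$, and $1_{(a,b]}$ means $1_{\{i\in\mathbb{N}:a<i\le b\}}$. $\psi(k)=\|1_{[1,k]}\|_X$; $\psi_P(k)=\min\{\|1_{[1,k]\cap P}\|_X,\|1_{[1,k]\cap P^c}\|_X\}$, $P^c=\mathbb{N}\setminus P$. $[M]^d$ is the set of $d$-tuples $(n_1,\dots,n_d)\in M^d$ with $n_1<\dots<n_d$. A block sequence $(x_i)_{i=1}^n$ is one with $x_i\in\mathrm{span}\{e_j: s_i\le j<s_{i+1}\}$ for some $s_1<\dots<s_{n+1}$. Lower $p$ and upper $q$ estimates with constant one: $(\sum_i\|x_i\|_X^p)^{1/p}\le\|\sum_ix_i\|_X\le(\sum_i\|x_i\|_X^q)^{1/q}$ for every block sequence (with the usual modification for $p=\infty$). Normalized: $\|e_i\|_X=1$; $1$-unconditional: $\|\sum a_ie_i\|\le\|\sum b_ie_i\|$ whenever $|a_i|\le|b_i|$. *)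

(* Defs.v *)
(* X is modelled by its norm on finitely supported
   real sequences indexed by nat; coordinate i >= 1 corresponds to e_i, and
   coordinate 0 is never used (all vectors considered vanish at 0). *)
From HB Require Import structures.
From mathcomp Require Import all_boot all_order all_algebra.
From mathcomp Require Import all_classical all_reals all_analysis.
Set Implicit Arguments. Unset Strict Implicit. Unset Printing Implicit Defensive.
Import Order.TTheory GRing.Theory Num.Theory.
Local Open Scope ring_scope.

Section Defs.
Context {R : realType}.

Definition supp_in (x : nat -> R) (K : nat) : Prop :=
  forall i, ((i == 0) || (K < i))%N -> x i = 0.
Definition finsupp (x : nat -> R) : Prop := exists K, supp_in x K.

Definition vadd (x y : nat -> R) : nat -> R := fun i => x i + y i.
Definition vscale (a : R) (x : nat -> R) : nat -> R := fun i => a * x i.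
Definition vsum (x : nat -> nat -> R) (n : nat) : nat -> R :=
  fun j => \sum_(i < n) x i j.

Definition is_norm (N : (nat -> R) -> R) : Prop :=
  (forall x, finsupp x -> 0 <= N x) /\
  (forall x, finsupp x -> N x = 0 -> x = (fun _ => 0)) /\
  (forall a x, finsupp x -> N (vscale a x) = `|a| * N x) /\
  (forall x y, finsupp x -> finsupp y -> N (vadd x y) <= N x + N y).

Definition ebasis (i : nat) : nat -> R := fun j => if j == i then 1 else 0.

Definition normalized (N : (nat -> R) -> R) : Prop :=
  forall i, (0 < i)%N -> N (ebasis i) = 1.

Definition unconditional1 (N : (nat -> R) -> R) : Prop :=
  forall a b, finsupp a -> finsupp b ->
    (forall i, `|a i| <= `|b i|) -> N a <= N b.

Definition supnorm (x : nat -> R) (K : nat) : R := \big[Num.max/0]_(i < K.+1) `|x i|.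

Definition equiv_c0 (N : (nat -> R) -> R) : Prop :=
  exists C : R, 0 < C /\ forall x K, supp_in x K ->
    C^-1 * supnorm x K <= N x /\ N x <= C * supnorm x K.

Definition ind (A : pred nat) : nat -> R := fun i => if A i then 1 else 0.
Definition itv_oc (a b : nat) : pred nat := fun i => (a < i <= b)%N.
Definition inter (A B : pred nat) : pred nat := fun i => A i && B i.
Definition compl (A : pred nat) : pred nat := fun i => ~~ A i.

Definition psi (N : (nat -> R) -> R) (k : nat) : R := N (ind (itv_oc 0 k)).
Definition psiP (N : (nat -> R) -> R) (P : pred nat) (k : nat) : R :=
  Num.min (N (ind (inter (itv_oc 0 k) P))) (N (ind (inter (itv_oc 0 k) (compl P)))).

Definition is_block (x : nat -> nat -> R) (n : nat) : Prop :=
  exists s : nat -> nat, (0 < s 0)%N /\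
    (forall i, (i < n)%N -> (s i < s i.+1)%N) /\
    (forall i, (i < n)%N -> forall j, ~~ (s i <= j < s i.+1)%N -> x i j = 0).

Definition lower_est (N : (nat -> R) -> R) (p : \bar R) : Prop :=
  forall x n, is_block x n ->
    match p with
    | r%:E => powR (\sum_(i < n) powR (N (x i)) r) r^-1 <= N (vsum x n)
    | +oo%E => \big[Num.max/0]_(i < n) N (x i) <= N (vsum x n)
    | -oo%E => false
    end.

Definition upper_est (N : (nat -> R) -> R) (q : R) : Prop :=
  forall x n, is_block x n ->
    N (vsum x n) <= powR (\sum_(i < n) powR (N (x i)) q) q^-1.

Definition einv (p : \bar R) : R :=
  match p with r%:E => r^-1 | _ => 0 end.

End Defs.

(* Main.v *)
Require Import Defs.
From HB Require Import structures.
From mathcomp Require Import all_boot all_order all_algebra.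
From mathcomp Require Import all_classical all_reals all_analysis.
From mathcomp Require Import ring lra.
Import Order.TTheory GRing.Theory Num.Theory.
Local Open Scope ring_scope.

Section An.
Variable R : realType.

Lemma bern (x r : R) : 0 <= x -> 0 < r <= 1 -> powR x r <= r * x + (1 - r).
Proof.
move=> x0 /andP[r0 r1].
have [->|r1'] := eqVneq r 1.
  by rewrite powRr1 // mul1r subrr addr0.
have rlt : r < 1 by rewrite lt_neqAle r1' r1.
have := @conjugate_powR R (powR x r) 1 r^-1 (1 - r)^-1 (powR_ge0 _ _) ler01.
rewrite invr_gt0 r0 invr_gt0 subr_gt0 rlt !invrK => /(_ isT isT).
rewrite addrC subrK => /(_ erefl).
rewrite mulr1 -powRrM mulfV ?gt_eqF // powRr1 // powR1.
by rewrite mul1r mulrC.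
Qed.

Lemma holder_like (d : nat) (a : nat -> R) (r : R) : (0 < d)%N -> 0 < r <= 1 ->
  (forall i, (i < d)%N -> 0 <= a i) -> \sum_(i < d) a i <= 1 ->
  \sum_(i < d) powR (a i) r <= powR d%:R (1 - r).
Proof.
move=> d0 hr a0 s1.
have dpos : (0 : R) < d%:R by rewrite ltr0n.
have h : powR d%:R r * \sum_(i < d) powR (a i) r <= d%:R.
  rewrite mulr_sumr.
  apply: (@le_trans _ _ (\sum_(i < d) (r * (d%:R * a i) + (1 - r)))).
    apply: ler_sum => i _; rewrite -powRM ?(ltW dpos) ?(a0 _ (ltn_ord i)) //; apply: bern => //.
    by apply: mulr_ge0; [exact: ltW|exact: (a0 _ (ltn_ord i))].
  rewrite big_split /= -mulr_sumr -mulr_sumr sumr_const card_ord.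
  case/andP: hr => r0 r1.
  have : r * (d%:R * \sum_(i < d) a i) <= r * d%:R.
    rewrite ler_pM2l // -[X in _ <= X]mulr1 ler_pM2l //.
  rewrite -[(1 - r) *+ d]mulr_natr. move=> H. nra.
have pr : 0 < powR (d%:R : R) r by rewrite powR_gt0.
rewrite -(ler_pM2l pr) (le_trans h) //.
rewrite -powRD; last by rewrite (gt_eqF dpos) implybT.
by rewrite addrC subrK powRr1 // ltW.
Qed.

Lemma powR1r (r : R) : powR 1 r = 1. Proof. by rewrite powR1. Qed.

Lemma bigmax_seq_ge (d : nat) (a : nat -> R) (s : seq 'I_d) (i : 'I_d) : i \in s ->
  a i <= \big[Num.max/0]_(j <- s) a j.
Proof.
elim: s => [//|x s IH]; rewrite in_cons big_cons le_max => /orP[/eqP->|h].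
  by rewrite lexx.
by rewrite IH ?orbT.
Qed.

Lemma bigmax_ge (d : nat) (a : nat -> R) (i : 'I_d) :
  a i <= \big[Num.max/0]_(j < d) a j.
Proof. exact: (@bigmax_seq_ge d a _ i (mem_index_enum i)). Qed.

Lemma sum_bound_fin (d : nat) (a : nat -> R) (r q : R) : (0 < d)%N -> 1 <= q -> q <= r ->
  (forall i, (i < d)%N -> 0 <= a i) ->
  powR (\sum_(i < d) powR (a i) r) r^-1 <= 1 ->
  \sum_(i < d) powR (a i) q <= powR d%:R (1 - q * r^-1).
Proof.
move=> d0 q1 qr a0 h.
have r0 : 0 < r by apply: (lt_le_trans _ qr); apply: (lt_le_trans ltr01).
have S0 : 0 <= \sum_(i < d) powR (a i) r by apply: sumr_ge0 => i _; exact: powR_ge0.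
have S1 : \sum_(i < d) powR (a i) r <= 1.
  have -> : \sum_(i < d) powR (a i) r = powR (powR (\sum_(i < d) powR (a i) r) r^-1) r.
    by rewrite -powRrM mulVf ?gt_eqF // powRr1.
  rewrite -(powR1r r); apply: ge0_ler_powR => //; first exact: ltW.
    by rewrite nnegrE powR_ge0.
  by rewrite nnegrE.
have e : forall i, powR (a i) q = powR (powR (a i) r) (q * r^-1).
  by move=> i; rewrite -powRrM mulrCA mulfV ?gt_eqF // mulr1.
rewrite (eq_bigr (fun i : 'I_d => powR (powR (a i) r) (q * r^-1))); last by move=> i _; exact: e.
apply: (@holder_like d (fun i => powR (a i) r) (q * r^-1)) => //; last by move=> i _; exact: powR_ge0.
have q0 : 0 < q by apply: lt_le_trans q1.
by rewrite divr_gt0 //= ler_pdivrMr // mul1r.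
Qed.

Lemma sum_bound_inf (d : nat) (a : nat -> R) (q : R) : 1 <= q ->
  (forall i, (i < d)%N -> 0 <= a i) ->
  \big[Num.max/0]_(i < d) a i <= 1 ->
  \sum_(i < d) powR (a i) q <= powR d%:R (1 - q * 0).
Proof.
move=> q1 a0 h; rewrite mulr0 subr0 powRr1 ?ler0n //.
apply: (@le_trans _ _ (\sum_(i < d) (1:R))); last by rewrite sumr_const card_ord.
apply: ler_sum => i _.
rewrite -(powR1r q); apply: ge0_ler_powR; rewrite ?nnegrE ?(a0 _ (ltn_ord i)) //.
  by apply: le_trans q1.
exact: le_trans (@bigmax_ge d a i) h.
Qed.

Lemma fin_bound (d : nat) (a b : nat -> R) (c q e : R) : 1 <= q -> 0 <= c ->
  (forall i, (i < d)%N -> 0 <= a i) -> (forall i, (i < d)%N -> 0 <= b i) -> (forall i, (i < d)%N -> b i <= c * a i) ->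
  \sum_(i < d) powR (a i) q <= powR d%:R (1 - q * e) ->
  powR (\sum_(i < d) powR (b i) q) q^-1 <= c * powR d%:R (q^-1 - e).
Proof.
move=> q1 c0 a0 b0 hb hs.
have q0 : 0 < q by apply: lt_le_trans q1.
have h1 : \sum_(i < d) powR (b i) q <= powR c q * powR d%:R (1 - q * e).
  apply: (@le_trans _ _ (powR c q * \sum_(i < d) powR (a i) q)); last first.
    by apply: ler_wpM2l => //; exact: powR_ge0.
  rewrite mulr_sumr; apply: ler_sum => i _.
  rewrite -powRM ?(a0 _ (ltn_ord i)) //; apply: (ge0_ler_powR (ltW q0)); rewrite ?nnegrE ?(b0 _ (ltn_ord i)) ?mulr_ge0 ?(a0 _ (ltn_ord i)) //.
  exact: hb.
apply: (@le_trans _ _ (powR (powR c q * powR d%:R (1 - q * e)) q^-1)).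
  apply: ge0_ler_powR; rewrite ?nnegrE ?invr_ge0 ?(ltW q0) //.
    by apply: sumr_ge0 => i _; exact: powR_ge0.
  by rewrite mulr_ge0 // powR_ge0.
rewrite powRM ?powR_ge0 // -!powRrM mulfV ?gt_eqF // powRr1 //.
have -> : (1 - q * e) * q^-1 = q^-1 - e by field; rewrite gt_eqF.
by [].
Qed.
End An.

From mathcomp Require Import zify.

Section Norm.
Variable (R : realType) (N : (nat -> R) -> R).
Hypothesis hN : is_norm N.
Hypothesis hU : unconditional1 N.
Local Notation ind := (@ind R).

Lemma ind_supp (A : pred nat) K : (forall i, A i -> (0 < i <= K)%N) -> supp_in (ind A) K.
Proof.
move=> h i hi; rewrite /ind; case: ifP => // /h.
move: hi; lia.
Qed.

Lemma N_ge0 x : finsupp x -> 0 <= N x.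
Proof. by case: hN => h _; apply: h. Qed.

Lemma N0 : N (fun _ => 0) = 0.
Proof.
have fs : finsupp (fun _ : nat => (0:R)) by exists 0%N.
case: hN => _ [_ [hs _]].
have e : vscale 0 (fun _ : nat => (0:R)) = (fun _ => 0).
  by apply: funext => i; rewrite /vscale mul0r.
by have := hs 0 _ fs; rewrite e normr0 mul0r.
Qed.

Lemma N_mono_ind (A B : pred nat) K : supp_in (ind B) K -> (forall i, A i -> B i) ->
  N (ind A) <= N (ind B).
Proof.
move=> hB hAB.
have hA : supp_in (ind A) K.
  move=> i hi; have := hB i hi; rewrite /ind.
  case: (boolP (A i)) => [hA|//]; rewrite (hAB _ hA) => /eqP; by rewrite oner_eq0.
apply: hU; [by exists K|by exists K|] => i.
rewrite /ind; case: (boolP (A i)) => [hAi|_]; first by rewrite (hAB _ hAi).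
by rewrite normr0; case: (B i); rewrite ?normr1 ?normr0 ?ler01.
Qed.

Lemma N_scale_ind (lam : R) (A : pred nat) K : supp_in (ind A) K ->
  N (fun j => lam * ind A j) = `|lam| * N (ind A).
Proof. by move=> h; case: hN => _ [_ [hs _]]; apply: (hs lam (ind A)); exists K. Qed.

Lemma N_split (a b : nat) (Q : pred nat) : (a <= b)%N ->
  N (ind (inter (itv_oc 0 b) Q)) <=
  N (ind (inter (itv_oc 0 a) Q)) + N (ind (inter (itv_oc a b) Q)).
Proof.
move=> ab.
have -> : ind (inter (itv_oc 0 b) Q) =
  vadd (ind (inter (itv_oc 0 a) Q)) (ind (inter (itv_oc a b) Q)).
  apply: funext => i; rewrite /vadd /ind /inter /itv_oc.
  case: (Q i); rewrite ?andbT ?andbF ?addr0 //.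
  have [hia|hia] := leqP i a.
    by rewrite (leq_trans hia ab) /= addr0.
  by rewrite andbF /= add0r (leq_ltn_trans (leq0n a) hia).
case: hN => _ [_ [_ ht]]; apply: ht.
  by exists a; apply: ind_supp => i /andP[]; rewrite /itv_oc.
by exists b; apply: ind_supp => i /andP[]; rewrite /itv_oc; lia.
Qed.

Lemma psi_mono a b : (a <= b)%N -> psi N a <= psi N b.
Proof.
move=> ab; apply: (@N_mono_ind _ _ b).
  by apply: ind_supp => i; rewrite /itv_oc.
by move=> i; rewrite /itv_oc; lia.
Qed.

Lemma psi_ge0 a : 0 <= psi N a.
Proof. by apply: N_ge0; exists a; apply: ind_supp => i; rewrite /itv_oc. Qed.

Lemma lowerA (P Q : pred nat) (C : R) (a b t : nat) :
  (Q = P \/ Q = compl P) ->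
  (forall K, (0 < K)%N -> psiP N P K >= (psi N K - 1) / 2) ->
  (a <= b)%N -> (0 < b)%N -> psi N b >= C * psi N t + 1 -> psi N a <= psi N t ->
  (C / 2 - 1) * psi N t <= N (ind (inter (itv_oc a b) Q)).
Proof.
move=> hQ hP ab b0 hb ha.
have h1 : (psi N b - 1) / 2 <= N (ind (inter (itv_oc 0 b) Q)).
  apply: (le_trans (hP b b0)); rewrite /psiP.
  by case: hQ => ->; rewrite ge_min lexx ?orbT.
have h2 := @N_split a b Q ab.
have h3 : N (ind (inter (itv_oc 0 a) Q)) <= psi N a.
  apply: (@N_mono_ind _ _ a); first by apply: ind_supp => i; rewrite /itv_oc.
  by move=> i /andP[].
lra.
Qed.


Lemma block_of (x : nat -> nat -> R) (u : nat -> nat) d :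
  (forall i, (i < d)%N -> (u i < u i.+1)%N) ->
  (forall i, (i < d)%N -> forall j, ~~ (u i < j <= u i.+1)%N -> x i j = 0) ->
  is_block x d.
Proof.
move=> hu hx; exists (fun i => (u i).+1); split; first by [].
split; first by move=> i hi; rewrite ltnS; exact: hu.
by move=> i hi j hj; apply: hx => //; rewrite ltnS in hj.
Qed.

Lemma claim (p : \bar R) (q c : R) (d : nat) (u : nat -> nat) (lam : nat -> R)
    (A B : nat -> pred nat) :
  lower_est N p -> upper_est N q -> 1 <= q -> (q%:E <= p)%E -> (0 < d)%N -> 0 <= c ->
  (forall i, (i < d)%N -> (u i < u i.+1)%N) ->
  (forall i, (i < d)%N -> forall j, A i j -> (u i < j <= u i.+1)%N) ->
  (forall i, (i < d)%N -> forall j, B i j -> (u i < j <= u i.+1)%N) ->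
  (forall i, (i < d)%N -> N (ind (B i)) <= c * N (ind (A i))) ->
  N (vsum (fun i j => lam i * ind (A i) j) d) <= 1 ->
  N (vsum (fun i j => lam i * ind (B i) j) d) <= c * powR d%:R (q^-1 - einv p).
Proof.
move=> hlow hup q1 qp d0 c0 hu hA hB hc h1.
set x := (fun i j => lam i * ind (A i) j).
set y := (fun i j => lam i * ind (B i) j).
have suppA : forall i, (i < d)%N -> supp_in (ind (A i)) (u i.+1).
  move=> i hi; apply: ind_supp => j /(hA i hi); lia.
have suppB : forall i, (i < d)%N -> supp_in (ind (B i)) (u i.+1).
  move=> i hi; apply: ind_supp => j /(hB i hi); lia.
have bx : is_block x d.
  apply: (@block_of x u d hu) => i hi j hj; rewrite /x /ind.
  case: (boolP (A i j)) => [/(hA i hi) h|_]; last by rewrite mulr0.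
  by rewrite h in hj.
have by_ : is_block y d.
  apply: (@block_of y u d hu) => i hi j hj; rewrite /y /ind.
  case: (boolP (B i j)) => [/(hB i hi) h|_]; last by rewrite mulr0.
  by rewrite h in hj.
have hx : forall i, (i < d)%N -> N (x i) = `|lam i| * N (ind (A i)).
  by move=> i hi; rewrite /x (@N_scale_ind (lam i) (A i) _ (suppA i hi)).
have hy : forall i, (i < d)%N -> N (y i) = `|lam i| * N (ind (B i)).
  by move=> i hi; rewrite /y (@N_scale_ind (lam i) (B i) _ (suppB i hi)).
have a0 : forall i, (i < d)%N -> 0 <= N (x i).
  move=> i hi; rewrite hx //; apply: mulr_ge0 => //.
  by apply: N_ge0; exists (u i.+1); exact: suppA.
have b0 : forall i, (i < d)%N -> 0 <= N (y i).
  move=> i hi; rewrite hy //; apply: mulr_ge0 => //.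
  by apply: N_ge0; exists (u i.+1); exact: suppB.
have hb : forall i, (i < d)%N -> N (y i) <= c * N (x i).
  move=> i hi; rewrite hx // hy // mulrCA; apply: ler_wpM2l => //; exact: hc.
have hsum : \sum_(i < d) powR (N (x i)) q <= powR d%:R (1 - q * einv p).
  move: (hlow x d bx); clear hlow; case: p qp => [r| |] //= qp hl.
    apply: (@sum_bound_fin R d (fun i => N (x i)) r q)  => //.
    exact: le_trans hl h1.
  apply: (@sum_bound_inf R d (fun i => N (x i)) q) => //.
  exact: le_trans hl h1.
apply: le_trans (hup y d by_) _.
exact: (@fin_bound R d (fun i => N (x i)) (fun i => N (y i))).
Qed.

End Norm.

Lemma psi0 (R : realType) (N : (nat -> R) -> R) : is_norm N -> psi N 0 = 0.
Proof.
move=> hN; rewrite /psi -(@N0 R N hN); congr N; apply: funext => i.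
by rewrite /ind /itv_oc leqn0; case: i.
Qed.

Lemma psi_ge1 (R : realType) (N : (nat -> R) -> R) y : unconditional1 N -> normalized N ->
  (0 < y)%N -> 1 <= psi N y.
Proof.
move=> hU hn y0.
have -> : 1 = N (ind (fun i => i == 1%N)).
  by rewrite -(hn 1%N).
apply: (@N_mono_ind R N hU _ _ y); first by apply: ind_supp => i; rewrite /itv_oc.
by move=> i /eqP ->; rewrite /itv_oc.
Qed.

Lemma kmono (k : nat -> nat) : (forall j, (k j < k j.+1)%N) ->
  forall j j', (j <= j')%N -> (k j <= k j')%N.
Proof.
move=> hk j; elim=> [|j' IH]; first by rewrite leqn0 => /eqP ->.
rewrite leq_eqVlt => /orP[/eqP ->//|h].
exact: leq_trans (IH h) (ltnW (hk j')).
Qed.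

Lemma Mlemma (R : realType) (N : (nat -> R) -> R) (k : nat -> nat) (C : R) x y :
  is_norm N -> unconditional1 N -> normalized N ->
  (0 < k 0%N)%N -> (forall j, (k j < k j.+1)%N) ->
  (forall j, psi N (k j.+1) >= C * psi N (k j) + 1) ->
  (x = 0%N \/ exists j, x = k j) -> (exists j, y = k j) -> (x < y)%N ->
  C * psi N x + 1 <= psi N y.
Proof.
move=> hN hU hn k0 hk hC [->|[j ->]] [j' ->] hxy.
  by rewrite (@psi0 R N hN) mulr0 add0r; apply: (@psi_ge1 R N _ hU hn).
have jj : (j < j')%N.
  rewrite ltnNge; apply/negP => h; have := @kmono k hk _ _ h; rewrite leqNgt hxy //.
apply: le_trans (hC j) _; apply: (@psi_mono R N hU); exact: (@kmono k hk).
Qed.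

Lemma reidx (R : realType) (F : nat -> nat -> R) (d : nat) :
  (fun i => \sum_(1 <= s < d.+1) F s i) = vsum (fun s i => F s.+1 i) d.
Proof.
by apply: funext => i; rewrite /vsum big_add1 /= big_mkord.
Qed.

Theorem lemma3p2 (R : realType) (N : (nat -> R) -> R) (p : \bar R) (q : R)
    (eps : R) (d : nat) (P : pred nat) (k : nat -> nat) :
  is_norm N -> normalized N -> unconditional1 N -> ~ equiv_c0 N ->
  1 <= q -> (q%:E <= p)%E -> lower_est N p -> upper_est N q ->
  0 < eps -> (0 < d)%N ->
  (forall K, (0 < K)%N -> psiP N P K >= (psi N K - 1) / 2) ->
  (0 < k 0%N)%N -> (forall j, (k j < k j.+1)%N) ->
  (forall j, psi N (k j.+1) >=
     (8 * powR d%:R (q^-1 - einv p) / eps + 2) * psi N (k j) + 1) ->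
  forall (m n : nat -> nat) (lam : nat -> R) (Q : pred nat),
  m 0%N = 0%N -> n 0%N = 0%N ->
  (forall s, (1 <= s <= d)%N -> (exists j, m s = k j) /\ (exists j, n s = k j)) ->
  (forall s, (1 <= s <= d)%N -> (m s < n s)%N) ->
  (forall s, (1 <= s < d)%N -> (n s < m s.+1)%N) ->
  (Q = P \/ Q = compl P) ->
  (N (fun i => \sum_(1 <= s < d.+1) lam s * ind (inter (itv_oc (n s.-1) (n s)) Q) i) <= 1 ->
   N (fun i => \sum_(1 <= s < d.+1) lam s * ind (itv_oc (n s.-1) (m s)) i) <= eps / 4)
  /\
  (N (fun i => \sum_(1 <= s < d.+1) lam s * ind (inter (itv_oc (m s.-1) (m s)) Q) i) <= 1 ->
   N (fun i => \sum_(1 <= s < d.+1) lam s * ind (itv_oc (m s.-1) (n s.-1)) i) <= eps / 4).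
Proof.
move=> hN hn hU _ q1 qp hlow hup eps0 d0 hP k0 hk hC m n lam Q m0 n0 hM hmn hnm hQ.
set D := powR d%:R (q^-1 - einv p).
have D0 : 0 < D by rewrite powR_gt0 // ltr0n.
set C := 8 * D / eps + 2.
set c := eps / (4 * D).
have c0 : 0 <= c by rewrite /c divr_ge0 // ?mulr_ge0 // ltW.
have ecD : c * D = eps / 4.
  by rewrite /c; field; rewrite gt_eqF.
have key : forall t : R, c * ((C / 2 - 1) * t) = t.
  by move=> t; rewrite /c /C; field; rewrite !gt_eqF.
have mpos : forall s, (1 <= s <= d)%N -> (0 < m s)%N.
  move=> s hs; case: (hM s hs) => [[j ->] _].
  exact: leq_trans k0 (@kmono k hk _ _ (leq0n j)).
have hmM : forall i, (i < d)%N -> exists j, m i.+1 = k j.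
  by move=> i hi; case: (hM i.+1) => //; rewrite ltnS hi.
have hnM : forall i, (i < d)%N -> exists j, n i.+1 = k j.
  by move=> i hi; case: (hM i.+1) => //; rewrite ltnS hi.
have hnm' : forall i, (i < d)%N -> (n i < m i.+1)%N.
  move=> [|i] hi; first by rewrite n0 mpos.
  by apply: hnm; rewrite /= hi.
have hmn' : forall i, (i < d)%N -> (m i.+1 < n i.+1)%N.
  by move=> i hi; apply: hmn; rewrite ltnS hi.
have hmm : forall i, (i < d)%N -> (m i <= n i)%N.
  move=> [|i] hi; first by rewrite m0.
  by apply: ltnW; apply: hmn; rewrite /= ltnW.
have Mx : forall x y, (x = 0%N \/ exists j, x = k j) -> (exists j, y = k j) -> (x < y)%N ->
    C * psi N x + 1 <= psi N y.
  by move=> x y hx hy hxy; apply: (@Mlemma R N k C x y hN hU hn k0 hk hC hx hy hxy).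
split => H.
- rewrite (@reidx R (fun s i => lam s * ind (inter (itv_oc (n s.-1) (n s)) Q) i)) /= in H.
  rewrite (@reidx R (fun s i => lam s * ind (itv_oc (n s.-1) (m s)) i) d) /= -ecD.
  apply: (@claim R N hN p q c d n (fun s => lam s.+1)
            (fun s => inter (itv_oc (n s) (n s.+1)) Q) (fun s => itv_oc (n s) (m s.+1)))
     => //.
  + by move=> i hi; exact: ltn_trans (hnm' i hi) (hmn' i hi).
  + by move=> i hi j /andP[].
  + move=> i hi j /andP[h1 h2]; rewrite h1 /=; exact: leq_trans h2 (ltnW (hmn' i hi)).
  + move=> i hi.
    have hl := @lowerA R N hN hU P Q C (n i) (n i.+1) (m i.+1) hQ hP
      (ltnW (ltn_trans (hnm' i hi) (hmn' i hi))) (leq_ltn_trans (leq0n _) (hmn' i hi))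
      (Mx _ _ (or_intror (hmM i hi)) (hnM i hi) (hmn' i hi))
      (@psi_mono R N hU _ _ (ltnW (hnm' i hi))).
    have hb : N (ind (itv_oc (n i) (m i.+1))) <= psi N (m i.+1).
      apply: (@N_mono_ind R N hU _ _ (m i.+1)).
        by apply: ind_supp => j; rewrite /itv_oc.
      by rewrite /itv_oc => j /andP[h1 h2]; rewrite h2 andbT; exact: leq_ltn_trans (leq0n _) h1.
    apply: (le_trans hb); rewrite -{1}(key (psi N (m i.+1))).
    by apply: ler_wpM2l.
- rewrite (@reidx R (fun s i => lam s * ind (inter (itv_oc (m s.-1) (m s)) Q) i)) /= in H.
  rewrite (@reidx R (fun s i => lam s * ind (itv_oc (m s.-1) (n s.-1)) i) d) /= -ecD.
  apply: (@claim R N hN p q c d m (fun s => lam s.+1)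
            (fun s => inter (itv_oc (m s) (m s.+1)) Q) (fun s => itv_oc (m s) (n s)))
     => //.
  + by move=> i hi; exact: leq_ltn_trans (hmm i hi) (hnm' i hi).
  + by move=> i hi j /andP[].
  + move=> i hi j /andP[h1 h2]; rewrite h1 /=; exact: leq_trans h2 (ltnW (hnm' i hi)).
  + move=> i hi.
    have hx : n i = 0%N \/ exists j, n i = k j.
      case: i hi => [|i] hi; first by left.
      by right; have [_ h] := hM i.+1 (ltnW hi).
    have hl := @lowerA R N hN hU P Q C (m i) (m i.+1) (n i) hQ hP
      (ltnW (leq_ltn_trans (hmm i hi) (hnm' i hi))) (leq_ltn_trans (leq0n _) (hnm' i hi))
      (Mx _ _ hx (hmM i hi) (hnm' i hi))
      (@psi_mono R N hU _ _ (hmm i hi)).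
    have hb : N (ind (itv_oc (m i) (n i))) <= psi N (n i).
      apply: (@N_mono_ind R N hU _ _ (n i)).
        by apply: ind_supp => j; rewrite /itv_oc.
      by rewrite /itv_oc => j /andP[h1 h2]; rewrite h2 andbT; exact: leq_ltn_trans (leq0n _) h1.
    apply: (le_trans hb); rewrite -{1}(key (psi N (n i))).
    by apply: ler_wpM2l.
Qed.
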